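(* Let $m,n$ be positive integers with $2m\le n$ and let $0<\delta,p,q<1$ be real numbers such that $pn$ and $qn$ are integers. Let $S$ and $T$ be uniformly random $pn$- and $qn$-element subsets of $\{1,\ldots,n\}$, respectively, chosen independently. Let $I$ be the set of indices $i\in\{1,\ldots,m\}$ such that $|\{2i-1,2i\}\cap S|=|\{2i-1,2i\}\cap T|=1$. Then \[\mathbb{P}\big[|I|\le(1-\delta)\cdot 4p(1-p)q(1-q)m\big]\le (n+1)^2e^{-\delta^2\cdot 4p(1-p)q(1-q)m/2}.\] *)

(* Defs.v *)
From HB Require Import structures.
From mathcomp Require Import all_boot all_order all_algebra.
From mathcomp Require Import all_classical all_reals all_analysis.
Set Implicit Arguments. Unset Strict Implicit. Unset Printing Implicit Defensive.
Import Order.TTheory GRing.Theory Num.Theory.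
Local Open Scope ring_scope.

(* Ground set {1,...,n} is modelled by 'I_n, with element k : 'I_n
   standing for k+1.  The pair {2i-1, 2i} (i = 1..m) becomes, for
   the 0-based index j = i-1 : 'I_m, the set {2j, 2j+1} of 'I_n. *)
Definition pair_set (n m : nat) (j : 'I_m) : {set 'I_n} :=
  [set k : 'I_n | (val k == 2 * val j)%N || (val k == (2 * val j).+1)%N].

Definition goodI (n m : nat) (S T : {set 'I_n}) : {set 'I_m} :=
  [set j : 'I_m | (#|pair_set n j :&: S| == 1)%N && (#|pair_set n j :&: T| == 1)%N].

Definition prob_ST (R : realType) (n a b : nat)
    (E : {set 'I_n} -> {set 'I_n} -> bool) : R :=
  (#|[set ST : {set 'I_n} * {set 'I_n} |
      [&& #|ST.1| == a, #|ST.2| == b & E ST.1 ST.2]]|)%:R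
  / (#|[set ST : {set 'I_n} * {set 'I_n} |
      (#|ST.1| == a) && (#|ST.2| == b)]|)%:R.

(* Main.v *)
Require Import Defs.
From HB Require Import structures.
From mathcomp Require Import all_boot all_order all_algebra.
From mathcomp Require Import all_classical all_reals all_analysis.
From mathcomp Require Import zify ring lra.
Import Order.TTheory GRing.Theory Num.Theory.
Import numFieldNormedType.Exports.
Local Open Scope ring_scope.

Lemma expR_ge2 (R : realType) (x : R) : 0 <= x -> 1 + x + x ^+ 2 / 2 <= expR x.
Proof.
move=> x0; rewrite /expR.
pose f : nat -> R := fun i => exp_coeff x i *+ (i < 3)%N.
have F k : (2 < k)%N -> \sum_(0 <= i < k) f i = 1 + x + x ^+ 2 / 2.
  move=> k2.
  rewrite (@big_cat_nat _ _ _ 3)//=.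
  have -> : \sum_(3 <= i < k) f i = 0.
    by rewrite big_nat big1 // => i /andP[i3 _]; rewrite /f ltnNge i3 mulr0n.
  rewrite addr0.
  rewrite !big_nat_recl // big_geq // /f /exp_coeff /= addr0 !mulr1n.
  by rewrite expr0 expr1 !divr1 addrA.
rewrite [leLHS](_ : _ = limn (series f)); last first.
  by apply/esym/(@lim_near_cst R^o) => //; near=> k; apply: F; near: k.
apply: ler_lim; first by apply: is_cvg_near_cst; near=> k; apply: F; near: k.
  exact: is_cvg_series_exp_coeff.
near=> k; apply: ler_sum => i _; rewrite /f.
case: (i < 3)%N; rewrite ?mulr1n ?mulr0n //.
by rewrite /exp_coeff /= divr_ge0 // exprn_ge0.
Unshelve. all: by end_near. Qed.

Set Implicit Arguments. Unset Strict Implicit. Unset Printing Implicit Defensive.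

Definition hw (R : realType) (p : R) (b : bool) : R := if b then p else 1 - p.
Definition wt (R : realType) n (p : R) (S : {set 'I_n}) : R :=
  \prod_(k : 'I_n) hw p (k \in S).
Definition tog n (i : 'I_n) (S : {set 'I_n}) : {set 'I_n} :=
  if i \in S then S :\ i else i |: S.

Lemma in_tog n (i k : 'I_n) S :
  (k \in tog i S) = if k == i then ~~ (i \in S) else k \in S.
Proof.
rewrite /tog; case: (i \in S) => /=; rewrite !inE; case: eqP => //= ->.
Qed.

Lemma togK n (i : 'I_n) : involutive (tog i).
Proof.
move=> S; apply/setP => k; rewrite !in_tog eqxx negbK.
by case: eqP => // ->.
Qed.

Lemma sum_ind (R : realType) n (p : R) (i : 'I_n) (f : {set 'I_n} -> R) :
  (forall S, f (tog i S) = f S) ->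
  \sum_(S : {set 'I_n}) wt p S * f S * (i \in S)%:R = p * \sum_(S : {set 'I_n}) wt p S * f S.
Proof.
move=> finv.
pose g (S : {set 'I_n}) := (\prod_(k | k != i) hw p (k \in S)) * f S.
have wE (S : {set 'I_n}) : wt p S * f S = hw p (i \in S) * g S.
  by rewrite /wt (bigD1 i) //= /g mulrA.
have ginv (S : {set 'I_n}) : g (tog i S) = g S.
  rewrite /g finv; congr (_ * _); apply: eq_bigr => k ki.
  by rewrite in_tog (negbTE ki).
have E : \sum_(S : {set 'I_n}) (i \in S)%:R * g S = \sum_(S : {set 'I_n}) (~~ (i \in S))%:R * g S.
  rewrite (reindex_inj (can_inj (togK i))) /=.
  by apply: eq_bigr => S _; rewrite ginv in_tog eqxx.
have -> : \sum_(S : {set 'I_n}) wt p S * f S * (i \in S)%:R = p * \sum_(S : {set 'I_n}) (i \in S)%:R * g S.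
  rewrite mulr_sumr; apply: eq_bigr => S _; rewrite wE /hw.
  by case: (i \in S) => /=; ring.
have -> : \sum_(S : {set 'I_n}) wt p S * f S =
    p * \sum_(S : {set 'I_n}) (i \in S)%:R * g S + (1 - p) * \sum_(S : {set 'I_n}) (~~ (i \in S))%:R * g S.
  rewrite !mulr_sumr -big_split; apply: eq_bigr => S _; rewrite wE /hw.
  by case: (i \in S) => /=; ring.
by rewrite -E; congr (_ * _); ring.
Qed.

Lemma sum_pair (R : realType) n (p : R) (o1 o2 : 'I_n) (f : {set 'I_n} -> R) :
  o1 != o2 ->
  (forall S, f (tog o1 S) = f S) -> (forall S, f (tog o2 S) = f S) ->
  \sum_(S : {set 'I_n}) wt p S * f S * ((o1 \in S) != (o2 \in S))%:R =
  2 * p * (1 - p) * \sum_(S : {set 'I_n}) wt p S * f S.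
Proof.
move=> ne f1 f2.
have E1 := sum_ind p f1.
have E2 := sum_ind p f2.
have E12 := @sum_ind R n p o1 (fun S => f S * (o2 \in S)%:R).
rewrite /= in E12.
have -> : \sum_(S : {set 'I_n}) wt p S * f S * ((o1 \in S) != (o2 \in S))%:R =
   \sum_(S : {set 'I_n}) wt p S * f S * (o1 \in S)%:R + \sum_(S : {set 'I_n}) wt p S * f S * (o2 \in S)%:R
   - 2 * \sum_(S : {set 'I_n}) wt p S * (f S * (o2 \in S)%:R) * (o1 \in S)%:R.
  rewrite mulr_sumr -big_split -sumrB; apply: eq_bigr => S _.
  by case: (o1 \in S); case: (o2 \in S) => /=; ring.
rewrite E1 E2 E12; last first.
  by move=> S; rewrite f1 in_tog eq_sym (negbTE ne).
have -> : \sum_(S : {set 'I_n}) wt p S * (f S * (o2 \in S)%:R) = \sum_(S : {set 'I_n}) wt p S * f S * (o2 \in S)%:R.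
  by apply: eq_bigr => S _; rewrite mulrA.
rewrite E2; ring.
Qed.


Lemma lt_o1 n m (H : (2 * m <= n)%N) (j : 'I_m) : (2 * j < n)%N.
Proof. have := ltn_ord j; lia. Qed.
Lemma lt_o2 n m (H : (2 * m <= n)%N) (j : 'I_m) : ((2 * j).+1 < n)%N.
Proof. have := ltn_ord j; lia. Qed.
Definition o1 n m (H : (2 * m <= n)%N) (j : 'I_m) : 'I_n := Ordinal (lt_o1 H j).
Definition o2 n m (H : (2 * m <= n)%N) (j : 'I_m) : 'I_n := Ordinal (lt_o2 H j).
Definition Ap n m (H : (2 * m <= n)%N) (j : 'I_m) (S : {set 'I_n}) : bool :=
  (o1 H j \in S) != (o2 H j \in S).

Lemma o12 n m (H : (2 * m <= n)%N) (j : 'I_m) : o1 H j != o2 H j.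
Proof. by rewrite -(inj_eq val_inj) /=; apply/eqP; lia. Qed.

Lemma pair_setE n m (H : (2 * m <= n)%N) (j : 'I_m) :
  pair_set n j = [set o1 H j; o2 H j].
Proof. by apply/setP => k; rewrite !inE -!(inj_eq val_inj). Qed.

Lemma card_pairI n m (H : (2 * m <= n)%N) (j : 'I_m) (S : {set 'I_n}) :
  (#|pair_set n j :&: S| == 1)%N = Ap H j S.
Proof.
rewrite pair_setE /Ap; have ne := o12 H j.
set x := o1 H j; set y := o2 H j.
case h1: (x \in S); case h2: (y \in S) => /=.
- have -> : [set x; y] :&: S = [set x; y].
    by apply/setP => k; rewrite !inE; case: eqP => [->|]; case: eqP => [->|] //=; rewrite ?h1 ?h2 ?orbT.
  by rewrite cards2 ne.
- have -> : [set x; y] :&: S = [set x].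
    apply/setP => k; rewrite !inE; case: eqP => [->|] /=; rewrite ?h1 //.
    by case: eqP => [->|] /=; rewrite ?h2 ?andbF.
  by rewrite cards1.
- have -> : [set x; y] :&: S = [set y].
    apply/setP => k; rewrite !inE; case: eqP => [->|] /=; rewrite ?h1 ?andbF.
      by rewrite (negbTE ne).
    by case: eqP => [->|] /=; rewrite ?h2 ?andbF.
  by rewrite cards1.
- have -> : [set x; y] :&: S = finset.set0.
    apply/setP => k; rewrite !inE; case: eqP => [->|] /=; rewrite ?h1 ?andbF //.
    by case: eqP => [->|] /=; rewrite ?h2 ?andbF.
  by rewrite cards0.
Qed.

Lemma goodIE n m (H : (2 * m <= n)%N) S T (j : 'I_m) :
  (j \in @goodI n m S T) = Ap H j S && Ap H j T.
Proof. by rewrite inE !(card_pairI H). Qed.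

Lemma Ap_tog n m (H : (2 * m <= n)%N) (j k : 'I_m) S :
  j != k -> Ap H j (tog (o1 H k) S) = Ap H j S /\ Ap H j (tog (o2 H k) S) = Ap H j S.
Proof.
move=> /eqP jk0; have jk : nat_of_ord j <> nat_of_ord k by move=> e; apply: jk0; apply: val_inj.
rewrite /Ap !in_tog.
have -> : (o1 H j == o1 H k) = false by rewrite -(inj_eq val_inj) /=; apply/eqP; lia.
have -> : (o2 H j == o1 H k) = false by rewrite -(inj_eq val_inj) /=; apply/eqP; lia.
have -> : (o1 H j == o2 H k) = false by rewrite -(inj_eq val_inj) /=; apply/eqP; lia.
have -> : (o2 H j == o2 H k) = false by rewrite -(inj_eq val_inj) /=; apply/eqP; lia.
by [].
Qed.


Definition Ex (R : realType) n (p q : R) (F : {set 'I_n} -> {set 'I_n} -> R) : R :=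
  \sum_(S : {set 'I_n}) \sum_(T : {set 'I_n}) wt p S * wt q T * F S T.

Definition Pk (R : realType) n m (H : (2 * m <= n)%N) (y : R) (k : nat)
  (S T : {set 'I_n}) : R :=
  \prod_(j : 'I_m | (j < k)%N) (1 - y * (Ap H j S && Ap H j T)%:R).

Lemma natr_andb (R : realType) (a b : bool) : ((a && b)%:R : R) = a%:R * b%:R.
Proof. by case: a; case: b => /=; ring. Qed.

Lemma Pk_tog (R : realType) n m (H : (2 * m <= n)%N) (y : R) k (ko : 'I_m) S T :
  (k <= ko)%N ->
  [/\ Pk H y k (tog (o1 H ko) S) T = Pk H y k S T,
      Pk H y k (tog (o2 H ko) S) T = Pk H y k S T,
      Pk H y k S (tog (o1 H ko) T) = Pk H y k S T &
      Pk H y k S (tog (o2 H ko) T) = Pk H y k S T].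
Proof.
move=> kko.
have G (j : 'I_m) : (j < k)%N -> j != ko.
  move=> jk; rewrite -(inj_eq val_inj) /=; apply/eqP; lia.
split; apply: eq_bigr => j jk;
  have [a1 a2] := Ap_tog H S (G j jk); have [b1 b2] := Ap_tog H T (G j jk);
  by rewrite ?a1 ?a2 ?b1 ?b2.
Qed.

Lemma Ex_Pk (R : realType) n m (H : (2 * m <= n)%N) (p q y : R) k :
  (k <= m)%N ->
  Ex p q (Pk H y k) =
  (1 - y * (2 * p * (1 - p)) * (2 * q * (1 - q))) ^+ k * @Ex R n p q (fun _ _ => 1).
Proof.
elim: k => [_|k IH km].
  rewrite expr0 mul1r; apply: eq_bigr => S _; apply: eq_bigr => T _.
  by rewrite /Pk big_pred0 // => j; rewrite ltn0.
have km' : (k < m)%N by [].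
pose ko := Ordinal km'.
have PkS S T : Pk H y k.+1 S T =
    (1 - y * (Ap H ko S && Ap H ko T)%:R) * Pk H y k S T.
  rewrite /Pk (bigD1 ko) //=; congr (_ * _); apply: eq_bigl => j.
  by rewrite -(inj_eq val_inj) /= ltnS [(j < k)%N]ltn_neqAle andbC.
pose G S := \sum_(T : {set 'I_n}) wt q T * Pk H y k S T.
have hT S : \sum_(T : {set 'I_n}) wt q T * Pk H y k S T * (Ap H ko T)%:R
    = 2 * q * (1 - q) * G S.
  apply: sum_pair; first exact: o12.
    by move=> T; case: (@Pk_tog R n m H y k ko S T (leqnn _)).
  by move=> T; case: (@Pk_tog R n m H y k ko S T (leqnn _)).
have hS : \sum_(S : {set 'I_n}) wt p S * G S * (Ap H ko S)%:R
    = 2 * p * (1 - p) * \sum_(S : {set 'I_n}) wt p S * G S.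
  apply: sum_pair; first exact: o12.
    move=> S; apply: eq_bigr => T _.
    by case: (@Pk_tog R n m H y k ko S T (leqnn _)) => -> .
  move=> S; apply: eq_bigr => T _.
  by case: (@Pk_tog R n m H y k ko S T (leqnn _)) => _ -> .
have ExE : Ex p q (Pk H y k) = \sum_(S : {set 'I_n}) wt p S * G S.
  apply: eq_bigr => S _; rewrite /G mulr_sumr; apply: eq_bigr => T _.
  by rewrite mulrA.
have -> : Ex p q (Pk H y k.+1) = \sum_(S : {set 'I_n})
    (wt p S * G S - y * (wt p S * (Ap H ko S)%:R *
       \sum_(T : {set 'I_n}) wt q T * Pk H y k S T * (Ap H ko T)%:R)).
  apply: eq_bigr => S _; rewrite /G !mulr_sumr -sumrB.
  apply: eq_bigr => T _; rewrite PkS natr_andb; ring.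
rewrite sumrB.
have -> : \sum_(S : {set 'I_n}) y * (wt p S * (Ap H ko S)%:R *
       \sum_(T : {set 'I_n}) wt q T * Pk H y k S T * (Ap H ko T)%:R)
    = y * (2 * q * (1 - q)) * \sum_(S : {set 'I_n}) wt p S * G S * (Ap H ko S)%:R.
  rewrite mulr_sumr; apply: eq_bigr => S _; rewrite hT; ring.
rewrite hS -ExE IH 1?ltnW // exprS; ring.
Qed.


Lemma wt_card (R : realType) n (p : R) (S : {set 'I_n}) :
  wt p S = p ^+ #|S| * (1 - p) ^+ (n - #|S|).
Proof.
rewrite /wt (bigID (fun k => k \in S)) /=.
have -> : \prod_(k | k \in S) hw p (k \in S) = p ^+ #|S|.
  by rewrite -prodr_const; apply: eq_bigr => k ->.
have -> : \prod_(k | k \notin S) hw p (k \in S) = (1 - p) ^+ #|[predC S]|.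
  rewrite -prodr_const; apply: eq_big => k; first by rewrite inE.
  by move=> /negbTE ->.
have E : #|[predC S]| = (n - #|S|)%N.
  by have := cardC S; rewrite card_ord; lia.
by rewrite E.
Qed.

Lemma sum_card (R : realType) n (F : nat -> R) :
  \sum_(S : {set 'I_n}) F #|S| = \sum_(k < n.+1) 'C(n, k)%:R * F k.
Proof.
rewrite (partition_big (fun S : {set 'I_n} => (inord #|S| : 'I_n.+1)) xpredT) //=.
apply: eq_bigr => k _.
have cS (S : {set 'I_n}) : (inord #|S| == k :> 'I_n.+1) = (#|S| == k).
  rewrite -(inj_eq val_inj) /= inordK //.
  by rewrite ltnS; have := max_card S; rewrite card_ord.
pose A : {set {set 'I_n}} := finset (fun S : {set 'I_n} => #|S| == nat_of_ord k).
transitivity (\sum_(S in A) F k).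
  apply: eq_big => S; first by rewrite /A inE cS.
  by rewrite cS => /eqP ->.
by rewrite sumr_const card_draws card_ord mulr_natl.
Qed.

Lemma sum_wt (R : realType) n (p : R) : \sum_(S : {set 'I_n}) wt p S = 1.
Proof.
under eq_bigr do rewrite wt_card.
rewrite (@sum_card R n (fun k => p ^+ k * (1 - p) ^+ (n - k))).
have E := exprDn (1 - p) p n; rewrite subrK expr1n in E.
rewrite [RHS]E; apply: eq_bigr => k _; rewrite -mulr_natl mulrC; ring.
Qed.

Lemma Ex1 (R : realType) n (p q : R) : @Ex R n p q (fun _ _ => 1) = 1.
Proof.
rewrite /Ex.
under eq_bigr do under eq_bigr do rewrite mulr1.
under eq_bigr do rewrite -mulr_sumr sum_wt mulr1.
exact: sum_wt.
Qed.


Lemma binom_mode (R : realType) n a (p : R) : 0 < p < 1 -> p * n%:R = a%:R ->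
  1 <= (n%:R + 1) * ('C(n, a)%:R * p ^+ a * (1 - p) ^+ (n - a)).
Proof.
move=> /andP[p0 p1] pa.
have n0 : 0 <= n%:R :> R by exact: ler0n.
have an : (a <= n)%N.
  by rewrite -(ler_nat R) -pa; nra.
pose b k : R := 'C(n, k)%:R * p ^+ k * (1 - p) ^+ (n - k).
have b0 k : 0 <= b k.
  by rewrite /b !mulr_ge0 ?exprn_ge0 ?ler0n //; lra.
have rec k : (k < n)%N -> b k.+1 * ((k.+1)%:R * (1 - p)) = b k * ((n - k)%:R * p).
  move=> kn; rewrite /b.
  have C : (k.+1)%:R * 'C(n, k.+1)%:R = (n - k)%:R * 'C(n, k)%:R :> R.
    by rewrite -!natrM mul_bin_left.
  have E : (n - k = (n - k.+1).+1)%N by lia.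
  rewrite {1}E !exprS.
  transitivity (p * p ^+ k * (1 - p) ^+ (n - k.+1) * (1 - p) *
                ((k.+1)%:R * 'C(n, k.+1)%:R)); first by ring.
  rewrite C; ring.
have up k : (k < a)%N -> b k <= b k.+1.
  move=> ka; have kn : (k < n)%N by lia.
  have := rec k kn; have := b0 k; have := b0 k.+1.
  have K : 0 < (k.+1)%:R * (1 - p).
    by rewrite mulr_gt0 // ?ltr0Sn // subr_gt0.
  have L : (k.+1)%:R * (1 - p) <= (n - k)%:R * p.
    rewrite natrB ?(ltnW kn) // -[(k.+1)%:R]natr1.
    have : (k.+1)%:R <= a%:R :> R by rewrite ler_nat.
    rewrite -natr1; nra.
  move: K L; set B1 := b k.+1; set B0 := b k; set KK := _ * (1 - p); set LL := _ * p.
  move=> K L h1 h0 e; nra.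
have down k : (a <= k)%N -> (k < n)%N -> b k.+1 <= b k.
  move=> ak kn.
  have := rec k kn; have := b0 k; have := b0 k.+1.
  have K : 0 < (k.+1)%:R * (1 - p).
    by rewrite mulr_gt0 // ?ltr0Sn // subr_gt0.
  have L : (n - k)%:R * p <= (k.+1)%:R * (1 - p).
    rewrite natrB ?(ltnW kn) // -[(k.+1)%:R]natr1.
    have : a%:R <= k%:R :> R by rewrite ler_nat.
    nra.
  move: K L; set B1 := b k.+1; set B0 := b k; set KK := _ * (1 - p); set LL := _ * p.
  move=> K L h1 h0 e; nra.
have upd d : (d <= a)%N -> b (a - d)%N <= b a.
  elim: d => [|d IH] da; first by rewrite subn0.
  apply: le_trans _ (IH (ltnW da)).
  have -> : (a - d = (a - d.+1).+1)%N by lia.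
  by apply: up; lia.
have downd d : (a + d <= n)%N -> b (a + d)%N <= b a.
  elim: d => [|d IH] dn; first by rewrite addn0.
  have dn' : (a + d <= n)%N by lia.
  apply: le_trans _ (IH dn').
  rewrite addnS; apply: down; lia.
have all k : (k <= n)%N -> b k <= b a.
  move=> kn; case: (leqP k a) => ka.
    by have := upd (a - k)%N (leq_subr _ _); rewrite subKn.
  by have := downd (k - a)%N; rewrite subnKC ?(ltnW ka) //; apply.
have S1 : \sum_(k < n.+1) b k = 1.
  have E := exprDn (1 - p) p n; rewrite subrK expr1n in E.
  rewrite [RHS]E; apply: eq_bigr => k _; rewrite /b -mulr_natl; ring.
rewrite -[X in X <= _]S1.
have H : \sum_(k < n.+1) b k <= \sum_(k < n.+1) b a.
  by apply: ler_sum => k _; apply: all; rewrite -ltnS.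
apply: (le_trans H); rewrite sumr_const card_ord.
rewrite mulrSr -mulr_natl /b le_eqVlt; apply/orP; left; apply/eqP; ring.
Qed.


Lemma expRN_le (R : realType) (d : R) : 0 <= d -> expR (- d) <= 1 - d + d ^+ 2 / 2.
Proof.
move=> d0; have E := @expR_ge2 R d d0.
have Ep : 0 < expR d := expR_gt0 d.
rewrite expRN -(ler_pM2l Ep) mulfV ?gt_eqF //.
have h : 0 <= d ^+ 4 by rewrite exprn_ge0.
have h2 : 0 < 1 - d + d ^+ 2 / 2.
  have : 0 <= (d - 1) ^+ 2 by apply: sqr_ge0.
  move=> H; nra.
nra.
Qed.

Lemma wt_ge0 (R : realType) n (p : R) (S : {set 'I_n}) : 0 <= p <= 1 -> 0 <= wt p S.
Proof.
move=> /andP[p0 p1]; rewrite /wt; apply: prodr_ge0 => k _; rewrite /hw.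
by case: (k \in S) => //; rewrite subr_ge0.
Qed.

Lemma card_sumR (R : realType) (T : finType) (A : {set T}) :
  (#|A|%:R : R) = \sum_x (x \in A)%:R.
Proof.
have -> : (#|A|%:R : R) = \sum_(x in A) 1 by rewrite sumr_const.
by rewrite big_mkcond /=; apply: eq_bigr => x _; case: (x \in A).
Qed.

Lemma Ex_scale (R : realType) n (p q K : R) (F : {set 'I_n} -> {set 'I_n} -> R) :
  Ex p q (fun S T => K * F S T) = K * Ex p q F.
Proof.
rewrite /Ex mulr_sumr; apply: eq_bigr => S _; rewrite mulr_sumr.
by apply: eq_bigr => T _; ring.
Qed.

Lemma Ex_le (R : realType) n (p q : R) (F G : {set 'I_n} -> {set 'I_n} -> R) :
  0 <= p <= 1 -> 0 <= q <= 1 -> (forall S T, F S T <= G S T) ->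
  Ex p q F <= Ex p q G.
Proof.
move=> hp hq FG; apply: ler_sum => S _; apply: ler_sum => T _.
by apply: ler_wpM2l; [apply: mulr_ge0; apply: wt_ge0 | apply: FG].
Qed.


Lemma D_card n a b :
  #|[set ST : {set 'I_n} * {set 'I_n} | (#|ST.1| == a) && (#|ST.2| == b)]| =
  ('C(n, a) * 'C(n, b))%N.
Proof.
have -> : [set ST : {set 'I_n} * {set 'I_n} | (#|ST.1| == a) && (#|ST.2| == b)] =
  finset.setX [set S : {set 'I_n} | #|S| == a] [set S : {set 'I_n} | #|S| == b].
  by apply/setP => -[S T]; rewrite !inE.
by rewrite cardsX !card_draws card_ord.
Qed.

Lemma N_bound (R : realType) n (p q : R) a b (E : {set 'I_n} -> {set 'I_n} -> bool) :
  0 <= p <= 1 -> 0 <= q <= 1 ->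
  (#|[set ST : {set 'I_n} * {set 'I_n} | [&& #|ST.1| == a, #|ST.2| == b & E ST.1 ST.2]]|)%:R
    * (p ^+ a * (1 - p) ^+ (n - a)) * (q ^+ b * (1 - q) ^+ (n - b))
  <= Ex p q (fun S T => (E S T)%:R).
Proof.
move=> hp hq.
rewrite card_sumR /Ex pair_bigA /= !mulr_suml.
apply: ler_sum => -[S T] _ /=; rewrite inE /=.
case: eqP => [Sa|_] /=; last first.
  by rewrite !mul0r !mulr_ge0 ?ler0n ?wt_ge0.
case: eqP => [Tb|_] /=; last first.
  by rewrite !mul0r !mulr_ge0 ?ler0n ?wt_ge0.
by rewrite !wt_card Sa Tb; case: (E S T) => /=; rewrite ?mul0r ?mulr0 ?mul1r ?mulr1.
Qed.

Lemma Pk_m (R : realType) n m (H : (2 * m <= n)%N) (e : R) S T :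
  Pk H (1 - e) m S T = e ^+ #|@goodI n m S T|.
Proof.
rewrite -prodr_const /Pk [RHS]big_mkcond /=.
apply: eq_big => [j|j _]; first by rewrite ltn_ord.
rewrite (goodIE H); case: (Ap H j S && Ap H j T) => /=; ring.
Qed.

Lemma ind_bound (R : realType) n m (H : (2 * m <= n)%N) (d c : R) S T :
  0 <= d ->
  ((((#|@goodI n m S T|)%:R <= c)%R)%:R : R) <= expR (d * c) * Pk H (1 - expR (- d)) m S T.
Proof.
move=> d0; rewrite Pk_m -expRM_natl -expRD.
have [Xc|Xc] := leP ((#|@goodI n m S T|)%:R : R) c; rewrite /= ?mulr0n ?mulr1n; last by rewrite expR_ge0.
apply: le_trans (expR_ge1Dx _); rewrite lerDl.
have : 0 <= d * (c - (#|@goodI n m S T|)%:R) by apply: mulr_ge0; rewrite // subr_ge0.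
by move=> h; lra.
Qed.

Lemma Ex_event (R : realType) n m (H : (2 * m <= n)%N) (p q d c : R) :
  0 <= p <= 1 -> 0 <= q <= 1 -> 0 <= d ->
  Ex p q (fun S T => ((((#|@goodI n m S T|)%:R <= c)%R)%:R : R))
  <= expR (d * c) * (1 - (1 - expR (- d)) * (2 * p * (1 - p)) * (2 * q * (1 - q))) ^+ m.
Proof.
move=> hp hq d0.
apply: le_trans (Ex_le hp hq (fun S T => ind_bound H c S T d0)) _.
rewrite Ex_scale (Ex_Pk H) // Ex1 mulr1.
by [].
Qed.


Lemma final_arith (R : realType) m (p q d : R) :
  0 < d < 1 -> 0 < p < 1 -> 0 < q < 1 ->
  expR (d * ((1 - d) * (4 * p * (1 - p) * q * (1 - q) * m%:R))) *
  (1 - (1 - expR (- d)) * (2 * p * (1 - p)) * (2 * q * (1 - q))) ^+ m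
  <= expR (- (d ^+ 2 * (4 * p * (1 - p) * q * (1 - q) * m%:R) / 2)).
Proof.
move=> /andP[d0 d1] /andP[p0 p1] /andP[q0 q1].
set y := 1 - expR (- d).
set r := (2 * p * (1 - p)) * (2 * q * (1 - q)).
have rE : 1 - y * (2 * p * (1 - p)) * (2 * q * (1 - q)) = 1 - y * r by rewrite /r; ring.
rewrite rE.
have r0 : 0 <= r by rewrite /r; apply: mulr_ge0; nra.
have r1 : r <= 1.
  have h1 : 2 * p * (1 - p) <= 1 by nra.
  have h2 : 2 * q * (1 - q) <= 1 by nra.
  have a0 : 0 <= 2 * p * (1 - p) by nra.
  have b0 : 0 <= 2 * q * (1 - q) by nra.
  by rewrite /r; apply: mulr_ile1.
have y1 : y <= 1 by rewrite /y; have := expR_ge0 (- d); lra.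
have y0 : 0 <= y.
  rewrite /y subr_ge0 expR_le1; lra.
have yl : d - d ^+ 2 / 2 <= y.
  by rewrite /y; have := expRN_le (ltW d0); lra.
have K0 : 0 <= 1 - y * r by nra.
have K1 : 1 - y * r <= expR (- (y * r)) by have := expR_ge1Dx (- (y * r)); lra.
have KK : (1 - y * r) ^+ m <= expR (- (y * r)) ^+ m.
  by apply: lerXn2r; rewrite ?nnegrE ?expR_ge0.
apply: le_trans (ler_wpM2l (expR_ge0 _) KK) _.
rewrite -expRM_natl -expRD ler_expR.
have m0 : 0 <= m%:R :> R by exact: ler0n.
have rm : 0 <= r * m%:R by apply: mulr_ge0.
have e : d - d ^+ 2 / 2 - y <= 0 by lra.
have -> : 4 * p * (1 - p) * q * (1 - q) * m%:R = r * m%:R by rewrite /r; ring.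
nra.
Qed.


Unset Implicit Arguments. Set Strict Implicit.

Theorem proposition2p3 (R : realType) (m n : nat) (delta p q : R) (a b : nat) :
  (0 < m)%N -> (0 < n)%N -> (2 * m <= n)%N ->
  0 < delta < 1 -> 0 < p < 1 -> 0 < q < 1 ->
  p * n%:R = a%:R -> q * n%:R = b%:R ->
  @prob_ST R n a b
    (fun S T => (#|@goodI n m S T|)%:R <= (1 - delta) * (4 * p * (1 - p) * q * (1 - q) * m%:R))
  <= (n%:R + 1) ^+ 2
     * expR (- (delta ^+ 2 * (4 * p * (1 - p) * q * (1 - q) * m%:R) / 2)).
Proof.
move=> m0 n0 H hd hp' hq' pa qb.
have hp : 0 <= p <= 1 by case/andP: hp' => p0 p1; rewrite !ltW.
have hq : 0 <= q <= 1 by case/andP: hq' => q0 q1; rewrite !ltW.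
have d0 : 0 <= delta by case/andP: hd => d0 _; rewrite ltW.
set c := (1 - delta) * _.
have NB := N_bound a b (fun S T => ((#|@goodI n m S T|)%:R <= c)%R) hp hq.
have EV := Ex_event H c hp hq d0.
have FA := final_arith m hd hp' hq'.
have Ba := binom_mode hp' pa.
have Bb := binom_mode hq' qb.
rewrite /prob_ST D_card natrM.
move: NB; set N := (#|_|)%:R => NB.
have an : (a <= n)%N.
  rewrite -(ler_nat R) -pa; have := ler0n R n; case/andP: hp' => _ p1; nra.
have bn : (b <= n)%N.
  rewrite -(ler_nat R) -qb; have := ler0n R n; case/andP: hq' => _ q1; nra.
have Ca : 0 < ('C(n, a))%:R :> R by rewrite ltr0n bin_gt0.
have Cb : 0 < ('C(n, b))%:R :> R by rewrite ltr0n bin_gt0.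
rewrite ler_pdivrMr ?mulr_gt0 //.
set U := (n%:R + 1) * _ in Ba.
set V := (n%:R + 1) * _ in Bb.
have N0 : 0 <= N by exact: ler0n.
have e1 : N <= N * U * V.
  have := ler_peMr N0 Ba; have := ler_peMr (mulr_ge0 N0 (le_trans ler01 Ba)) Bb.
  move=> h1 h2; exact: le_trans h2 h1.
apply: le_trans e1 _.
set wa := p ^+ a * _ in NB; set wb := q ^+ b * _ in NB.
have -> : N * U * V = ((n%:R + 1) ^+ 2 * ('C(n, a)%:R * 'C(n, b)%:R)) * (N * wa * wb).
  by rewrite /U /V /wa /wb; ring.
set E := expR _.
have : N * wa * wb <= E.
  apply: le_trans NB _; apply: le_trans EV _; exact: FA.
move=> h; rewrite [X in _ <= X](_ : _ = ((n%:R + 1) ^+ 2 * ('C(n, a)%:R * 'C(n, b)%:R)) * E); last by ring.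
apply: ler_wpM2l => //.
Qed.
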